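(* Let $(S_n)_{n\ge0}$ be the random walk with two memory channels with memory parameter $p\in(7/8,1)$. Then $\operatorname{Var}(S_n)\sim n^2$ as $n\to\infty$, i.e. the walk is ballistic.
   Context: A random variable is $\mathrm{Rad}(q)$ if it equals $+1$ with probability $q$ and $-1$ with probability $1-q$. Random walk with two memory channels with parameter $p\in(0,1)$: $S_0=0$; $X_1,X_2$ are i.i.d. $\mathrm{Rad}(1/2)$; for each $n\ge 2$, let $U_{1,n+1},U_{2,n+1}$ be i.i.d. uniform on $\{1,\dots,n\}$ and $\alpha_{1,n+1},\alpha_{2,n+1}$ i.i.d. $\mathrm{Rad}(p)$, all mutually independent and independent of $X_1,\dots,X_n$ (and of all earlier draws); set $T_{n+1}=\alpha_{1,n+1}X_{U_{1,n+1}}+\alpha_{2,n+1}X_{U_{2,n+1}}$ and $X_{n+1}=\max(-1,\min(1,T_{n+1}))\in\{-1,0,1\}$. Then $S_n=X_1+\dots+X_n$. Here $\operatorname{Var}(S_n)\sim n^2$ means $\operatorname{Var}(S_n)$ grows at the order $n^2$ (the ratio $\operatorname{Var}(S_n)/n^2$ stays bounded away from $0$ and $\infty$). *)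

(* Defs.v *)
From Stdlib Require Import Reals List ZArith.
Import ListNotations.
Open Scope R_scope.

(* A finite discrete law: list of (outcome, probability mass) pairs
   (outcomes may repeat; masses add up). *)
Definition law (A : Type) := list (A * R).

Definition clamp (t : Z) : Z := Z.max (-1) (Z.min 1 t).

Definition rad_law (q : R) : law Z := [(1%Z, q); ((-1)%Z, 1 - q)].

(* One step of the two-channel memory walk: given the law of the path
   (X_1,...,X_n) (stored as the list [X_1; ...; X_n], n >= 2), produce the law
   of (X_1,...,X_{n+1}), where U_1,U_2 are i.i.d. uniform on {1,...,n}
   (list index u-1 ranges over 0..n-1), alpha_1,alpha_2 are i.i.d. Rad(p),
   all independent of each other and of the past, and
   X_{n+1} = clamp(alpha_1 X_{U_1} + alpha_2 X_{U_2}). *)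
Definition step (p : R) (L : law (list Z)) : law (list Z) :=
  flat_map (fun xq : list Z * R =>
    let (xs, q) := xq in
    let n := length xs in
    flat_map (fun u1 : nat =>
      flat_map (fun u2 : nat =>
        flat_map (fun ar1 : Z * R =>
          let (a1, r1) := ar1 in
          map (fun ar2 : Z * R =>
            let (a2, r2) := ar2 in
            (xs ++ [clamp (a1 * nth u1 xs 0 + a2 * nth u2 xs 0)%Z],
             q * / INR n * / INR n * r1 * r2))
            (rad_law p))
          (rad_law p))
        (seq 0 n))
      (seq 0 n))
    L.

Definition law2 : law (list Z) :=
  [([1%Z; 1%Z], 1/4); ([1%Z; (-1)%Z], 1/4);
   ([(-1)%Z; 1%Z], 1/4); ([(-1)%Z; (-1)%Z], 1/4)].

Definition walk_law (p : R) (n : nat) : law (list Z) :=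
  match n with
  | O => [([], 1)]
  | S O => [([1%Z], 1/2); ([(-1)%Z], 1/2)]
  | S (S k) => Nat.iter k (step p) law2
  end.

Definition Ssum (xs : list Z) : R := IZR (fold_right Z.add 0%Z xs).

Definition expect {A : Type} (L : law A) (f : A -> R) : R :=
  fold_right (fun (xq : A * R) acc => snd xq * f (fst xq) + acc) 0 L.

Definition VarS (p : R) (n : nat) : R :=
  expect (walk_law p n) (fun xs => Ssum xs ^ 2)
  - (expect (walk_law p n) Ssum) ^ 2.

(* Main.v *)
Require Import Defs.
From Stdlib Require Import Reals Lra Lia Psatz ZArith List.
Import ListNotations.
Open Scope R_scope.

Fixpoint sumL {A : Type} (l : list A) (g : A -> R) : R :=
  match l with [] => 0 | a :: l' => g a + sumL l' g end.

Lemma expect_sumL {A : Type} (L : law A) f :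
  expect L f = sumL L (fun xq => snd xq * f (fst xq)).
Proof. induction L as [|a L IH]; simpl; auto. rewrite IH; reflexivity. Qed.

Lemma sumL_app {A : Type} (l1 l2 : list A) g : sumL (l1 ++ l2) g = sumL l1 g + sumL l2 g.
Proof. induction l1; simpl; [ring| rewrite IHl1; ring]. Qed.

Lemma sumL_flat_map {A B : Type} (l : list A) (h : A -> list B) g :
  sumL (flat_map h l) g = sumL l (fun a => sumL (h a) g).
Proof. induction l; simpl; auto. rewrite sumL_app, IHl; reflexivity. Qed.

Lemma sumL_map {A B : Type} (l : list A) (h : A -> B) g :
  sumL (map h l) g = sumL l (fun a => g (h a)).
Proof. induction l; simpl; auto. rewrite IHl; reflexivity. Qed.

Lemma sumL_ext {A : Type} (l : list A) g1 g2 :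
  (forall a, In a l -> g1 a = g2 a) -> sumL l g1 = sumL l g2.
Proof. induction l; simpl; intros H; auto. rewrite H, IHl; auto. Qed.

Lemma sumL_scale {A : Type} (l : list A) c g :
  sumL l (fun a => c * g a) = c * sumL l g.
Proof. induction l; simpl; [ring| rewrite IHl; ring]. Qed.

Lemma sumL_le {A : Type} (l : list A) g1 g2 :
  (forall a, In a l -> g1 a <= g2 a) -> sumL l g1 <= sumL l g2.
Proof. induction l; simpl; intros H; [lra|]. apply Rplus_le_compat; auto. Qed.

Lemma sumL_seq_shift k n (g : nat -> R) :
  sumL (seq (S k) n) g = sumL (seq k n) (fun u => g (S u)).
Proof. rewrite <- seq_shift, sumL_map. reflexivity. Qed.

Lemma sum_nth (xs : list Z) (g : Z -> R) :
  sumL (seq 0 (length xs)) (fun u => g (nth u xs 0%Z)) = sumL xs g.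
Proof.
  induction xs as [|x xs IH]; simpl; auto.
  rewrite sumL_seq_shift. simpl. rewrite IH. reflexivity.
Qed.

Definition tri (x : Z) : Prop := x = 1%Z \/ x = (-1)%Z \/ x = 0%Z.

Definition Sx (xs : list Z) : R := sumL xs IZR.
Definition Tx (xs : list Z) : R := sumL xs (fun x => IZR x ^ 2).

Lemma sum_tri (xs : list Z) (g : Z -> R) :
  Forall tri xs ->
  sumL xs g = INR (length xs) * g 0%Z + Sx xs * (g 1%Z - g (-1)%Z) / 2
              + Tx xs * ((g 1%Z + g (-1)%Z) / 2 - g 0%Z).
Proof.
  unfold Sx, Tx. induction xs as [|x xs IH]; intros H.
  - simpl. field.
  - inversion H; subst. cbn [sumL length]. rewrite S_INR. rewrite IH by auto.
    destruct H2 as [E|[E|E]]; rewrite E; simpl; field.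
Qed.

Definition kern (p : R) (f : list Z -> R) (xs : list Z) (y1 y2 : Z) : R :=
  p * p * f (xs ++ [clamp (1 * y1 + 1 * y2)]) +
  p * (1 - p) * f (xs ++ [clamp (1 * y1 + -1 * y2)]) +
  (1 - p) * p * f (xs ++ [clamp (-1 * y1 + 1 * y2)]) +
  (1 - p) * (1 - p) * f (xs ++ [clamp (-1 * y1 + -1 * y2)]).

Definition Kstep (p : R) (f : list Z -> R) (xs : list Z) : R :=
  / INR (length xs) * / INR (length xs) *
  sumL (seq 0 (length xs)) (fun u1 => sumL (seq 0 (length xs)) (fun u2 =>
     kern p f xs (nth u1 xs 0%Z) (nth u2 xs 0%Z))).

Lemma expect_step p (L : law (list Z)) f :
  expect (step p L) f = expect L (Kstep p f).
Proof.
  rewrite !expect_sumL. unfold step. rewrite sumL_flat_map.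
  apply sumL_ext. intros [xs q] _. simpl.
  rewrite sumL_flat_map. unfold Kstep.
  rewrite <- !sumL_scale. apply sumL_ext. intros u1 _.
  rewrite sumL_flat_map. rewrite <- !sumL_scale. apply sumL_ext. intros u2 _.
  unfold kern. simpl. ring.
Qed.

Lemma sum_tri3 (xs : list Z) (g : Z -> R) :
  Forall tri xs ->
  sumL xs g = (Tx xs + Sx xs) / 2 * g 1%Z + (Tx xs - Sx xs) / 2 * g (-1)%Z
              + (INR (length xs) - Tx xs) * g 0%Z.
Proof. intros H. rewrite sum_tri by auto. field. Qed.

Lemma double_sum (xs : list Z) (k : Z -> Z -> R) :
  Forall tri xs ->
  sumL (seq 0 (length xs)) (fun u1 => sumL (seq 0 (length xs)) (fun u2 =>
     k (nth u1 xs 0%Z) (nth u2 xs 0%Z))) =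
  let A := (Tx xs + Sx xs) / 2 in let B := (Tx xs - Sx xs) / 2 in
  let C := INR (length xs) - Tx xs in
  A * (A * k 1%Z 1%Z + B * k 1%Z (-1)%Z + C * k 1%Z 0%Z) +
  B * (A * k (-1)%Z 1%Z + B * k (-1)%Z (-1)%Z + C * k (-1)%Z 0%Z) +
  C * (A * k 0%Z 1%Z + B * k 0%Z (-1)%Z + C * k 0%Z 0%Z).
Proof.
  intros H.
  rewrite (sumL_ext _ _ (fun u1 => sumL xs (k (nth u1 xs 0%Z)))) by (intros; apply sum_nth).
  rewrite (sum_nth xs (fun y1 => sumL xs (k y1))).
  rewrite sum_tri3 by auto.
  rewrite !(sum_tri3 xs (k _)) by auto. simpl. ring.
Qed.

Lemma cl2 : clamp 2 = 1%Z. Proof. reflexivity. Qed.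
Lemma cl0 : clamp 0 = 0%Z. Proof. reflexivity. Qed.
Lemma clm2 : clamp (-2) = (-1)%Z. Proof. reflexivity. Qed.
Lemma cl1 : clamp 1 = 1%Z. Proof. reflexivity. Qed.
Lemma clm1 : clamp (-1) = (-1)%Z. Proof. reflexivity. Qed.

Section KF.
Variable p : R.
Definition qq := 2 * p - 1.

Definition Pp (S T n : R) := let u := (T + qq * S) / (2 * n) in let w := (n - T) / n in u * (u + 2 * w).
Definition Pm (S T n : R) := let v := (T - qq * S) / (2 * n) in let w := (n - T) / n in v * (v + 2 * w).
Definition P0 (S T n : R) := let u := (T + qq * S) / (2 * n) in let v := (T - qq * S) / (2 * n) in
   let w := (n - T) / n in w * w + 2 * u * v.

Lemma Kstep_formula f xs : Forall tri xs -> (1 <= length xs)%nat ->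
  Kstep p f xs =
    Pp (Sx xs) (Tx xs) (INR (length xs)) * f (xs ++ [1%Z]) +
    Pm (Sx xs) (Tx xs) (INR (length xs)) * f (xs ++ [(-1)%Z]) +
    P0 (Sx xs) (Tx xs) (INR (length xs)) * f (xs ++ [0%Z]).
Proof.
  intros H Hl. unfold Kstep. rewrite double_sum by auto.
  unfold kern. simpl. rewrite ?cl2, ?cl0, ?clm2, ?cl1, ?clm1.
  assert (Hn : 0 < INR (length xs)) by (apply lt_0_INR; lia).
  unfold Pp, Pm, P0, qq. set (F1 := f (xs ++ [1%Z])). set (F2 := f (xs ++ [(-1)%Z])). set (F3 := f (xs ++ [0%Z])). set (n := INR (length xs)) in *. set (S := Sx xs). set (T := Tx xs). field. lra.
Qed.
End KF.

Lemma expect_ext_in {A : Type} (L : law A) f g :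
  (forall x r, In (x, r) L -> f x = g x) -> expect L f = expect L g.
Proof.
  rewrite !expect_sumL. intros H. apply sumL_ext. intros [x r] Hin. simpl. rewrite (H x r Hin). auto.
Qed.

Lemma expect_le_in {A : Type} (L : law A) f g :
  (forall x r, In (x, r) L -> 0 <= r /\ f x <= g x) -> expect L f <= expect L g.
Proof.
  rewrite !expect_sumL. intros H. apply sumL_le. intros [x r] Hin. simpl.
  destruct (H x r Hin). apply Rmult_le_compat_l; auto.
Qed.

Lemma expect_scale {A : Type} (L : law A) c f :
  expect L (fun x => c * f x) = c * expect L f.
Proof.
  rewrite !expect_sumL. rewrite <- sumL_scale. apply sumL_ext. intros; ring.
Qed.

Lemma expect_nonneg {A : Type} (L : law A) f :
  (forall x r, In (x, r) L -> 0 <= r /\ 0 <= f x) -> 0 <= expect L f.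
Proof.
  induction L as [|[x r] L IH]; simpl; intros H; [lra|].
  destruct (H x r (or_introl eq_refl)).
  assert (0 <= expect L f) by (apply IH; intros y s Hy; apply (H y s); auto).
  unfold expect in *. nra.
Qed.

Lemma expect_single {A : Type} (L : law A) f x0 r0 :
  In (x0, r0) L -> (forall x r, In (x, r) L -> 0 <= r /\ 0 <= f x) ->
  r0 * f x0 <= expect L f.
Proof.
  induction L as [|[x r] L IH]; simpl; intros Hin H; [contradiction|].
  destruct (H x r (or_introl eq_refl)).
  destruct Hin as [E|Hin].
  - inversion E; subst. assert (0 <= expect L f).
    { apply expect_nonneg. intros y s Hy; apply (H y s); auto. }
    unfold expect in *. lra.
  - assert (r0 * f x0 <= expect L f) by (apply IH; auto; intros y s Hy; apply (H y s); auto).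
    unfold expect in *. nra.
Qed.

Lemma step_In p (L : law (list Z)) ys r : In (ys, r) (step p L) ->
  exists xs q u1 u2 a1 r1 a2 r2, In (xs, q) L /\ In (a1, r1) (rad_law p) /\
    In (a2, r2) (rad_law p) /\
    ys = xs ++ [clamp (a1 * nth u1 xs 0 + a2 * nth u2 xs 0)]%Z /\
    r = q * / INR (length xs) * / INR (length xs) * r1 * r2.
Proof.
  unfold step. intros H. apply in_flat_map in H. destruct H as [[xs q] [Hin H]].
  apply in_flat_map in H. destruct H as [u1 [_ H]].
  apply in_flat_map in H. destruct H as [u2 [_ H]].
  apply in_flat_map in H. destruct H as [[a1 r1] [H1 H]].
  apply in_map_iff in H. destruct H as [[a2 r2] [E H2]].
  inversion E; subst. exists xs, q, u1, u2, a1, r1, a2, r2. repeat split; auto.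
Qed.

Lemma step_In_intro p (L : law (list Z)) xs q : In (xs, q) L -> (1 <= length xs)%nat ->
  In (xs ++ [clamp (1 * nth 0 xs 0 + 1 * nth 0 xs 0)]%Z,
      q * / INR (length xs) * / INR (length xs) * p * p) (step p L).
Proof.
  intros Hin Hl. unfold step. apply in_flat_map. exists (xs, q). split; auto.
  apply in_flat_map. exists 0%nat. split; [apply in_seq; lia|].
  apply in_flat_map. exists 0%nat. split; [apply in_seq; lia|].
  apply in_flat_map. exists (1%Z, p). split; [simpl; auto|].
  apply in_map_iff. exists (1%Z, p). split; [reflexivity|simpl; auto].
Qed.

Definition WF (n : nat) (L : law (list Z)) : Prop :=
  forall ys r, In (ys, r) L -> length ys = n /\ Forall tri ys /\ 0 <= r.

Lemma clamp_tri z : tri (clamp z).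
Proof. unfold tri, clamp. lia. Qed.

Lemma WF_step p n L : 0 <= p <= 1 -> (1 <= n)%nat -> WF n L -> WF (S n) (step p L).
Proof.
  intros Hp Hn HW ys r H.
  destruct (step_In p L ys r H) as (xs & q & u1 & u2 & a1 & r1 & a2 & r2 & Hin & H1 & H2 & E1 & E2).
  destruct (HW xs q Hin) as (Hl & Ht & Hq). subst.
  rewrite length_app. simpl. split; [lia|]. split.
  - apply Forall_app. split; auto. constructor; [apply clamp_tri|constructor].
  - assert (0 <= r1) by (simpl in H1; destruct H1 as [E|[E|[]]]; inversion E; lra).
    assert (0 <= r2) by (simpl in H2; destruct H2 as [E|[E|[]]]; inversion E; lra).
    assert (0 < INR (length xs)) by (apply lt_0_INR; lia).
    assert (0 <= / INR (length xs)) by (left; apply Rinv_0_lt_compat; auto).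
    repeat apply Rmult_le_pos; auto.
Qed.

Definition W (p : R) (k : nat) : law (list Z) := Nat.iter k (step p) law2.

Lemma walk_W p k : walk_law p (S (S k)) = W p k.
Proof. reflexivity. Qed.

Lemma W_S p k : W p (S k) = step p (W p k).
Proof. reflexivity. Qed.

Lemma W_WF p k : 0 <= p <= 1 -> WF (S (S k)) (W p k).
Proof.
  intros Hp. induction k.
  - intros ys r H. simpl in H.
    destruct H as [E|[E|[E|[E|[]]]]]; inversion E; subst; simpl;
      repeat split; try lra; repeat constructor; unfold tri; lia.
  - rewrite W_S. apply WF_step; auto. lia.
Qed.

Lemma Ssum_Sx xs : Ssum xs = Sx xs.
Proof.
  unfold Ssum, Sx. induction xs; simpl; auto. rewrite plus_IZR, IHxs. reflexivity.
Qed.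

Lemma tri_bounds xs : Forall tri xs ->
  - Tx xs <= Sx xs <= Tx xs /\ 0 <= Tx xs <= INR (length xs).
Proof.
  unfold Sx, Tx. induction xs as [|x xs IH]; intros H.
  - simpl. lra.
  - inversion H; subst. specialize (IH H3). cbn [sumL length]. rewrite S_INR.
    destruct H2 as [E|[E|E]]; rewrite E; lra.
Qed.

Lemma Psum p S T n : 0 < n -> Pp p S T n + Pm p S T n + P0 p S T n = 1.
Proof. intros. unfold Pp, Pm, P0. field. lra. Qed.

Lemma W_mass p k : 0 <= p <= 1 -> expect (W p k) (fun _ => 1) = 1.
Proof.
  intros Hp. induction k.
  - simpl. lra.
  - rewrite W_S, expect_step. transitivity (expect (W p k) (fun _ => 1)); [|exact IHk]. apply expect_ext_in.
    intros xs r Hin. destruct (W_WF p k Hp xs r Hin) as (Hl & Ht & _).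
    rewrite Kstep_formula by (auto; lia).
    cbv beta. rewrite !Rmult_1_r. apply Psum.
    apply lt_0_INR. lia.
Qed.

Definition negl (xs : list Z) : list Z := map Z.opp xs.

Lemma negl_tri xs : Forall tri xs -> Forall tri (negl xs).
Proof.
  intros H. unfold negl. apply Forall_map. eapply Forall_impl; [|exact H].
  intros a Ha. unfold tri in *. lia.
Qed.

Lemma Sx_negl xs : Sx (negl xs) = - Sx xs.
Proof. unfold Sx, negl. induction xs; cbn [sumL map]; [ring|]. rewrite IHxs, opp_IZR. ring. Qed.

Lemma Tx_negl xs : Tx (negl xs) = Tx xs.
Proof. unfold Tx, negl. induction xs; cbn [sumL map]; [ring|]. rewrite IHxs, opp_IZR. ring. Qed.

Lemma Pp_neg p S T n : Pp p (- S) T n = Pm p S T n.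
Proof. unfold Pp, Pm. replace (T + qq p * - S) with (T - qq p * S) by ring. reflexivity. Qed.
Lemma Pm_neg p S T n : Pm p (- S) T n = Pp p S T n.
Proof. unfold Pp, Pm. replace (T - qq p * - S) with (T + qq p * S) by ring. reflexivity. Qed.
Lemma P0_neg p S T n : P0 p (- S) T n = P0 p S T n.
Proof. unfold P0. replace (T - qq p * - S) with (T + qq p * S) by ring.
  replace (T + qq p * - S) with (T - qq p * S) by ring. 
  set (a := (T + qq p * S) / (2 * n)). set (b := (T - qq p * S) / (2 * n)). ring. Qed.

Lemma W_sym p k : 0 <= p <= 1 -> forall f,
  expect (W p k) f = expect (W p k) (fun xs => f (negl xs)).
Proof.
  intros Hp. induction k; intros f.
  - simpl. lra.
  - rewrite W_S, !expect_step. rewrite IHk. apply expect_ext_in.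
    intros xs r Hin. destruct (W_WF p k Hp xs r Hin) as (Hl & Ht & _).
    assert (Hl' : length (negl xs) = length xs) by (unfold negl; apply length_map).
    rewrite !Kstep_formula; auto using negl_tri; try lia.
    rewrite Hl', Sx_negl, Tx_negl.
    unfold negl at 4 5 6. rewrite !map_app. simpl. fold (negl xs).
    rewrite Pp_neg, Pm_neg, P0_neg. ring.
Qed.

Lemma W_mean p k : 0 <= p <= 1 -> expect (W p k) Ssum = 0.
Proof.
  intros Hp. pose proof (W_sym p k Hp Ssum) as H.
  rewrite (expect_ext_in _ (fun xs => Ssum (negl xs)) (fun xs => -1 * Ssum xs)) in H.
  - rewrite expect_scale in H. lra.
  - intros. rewrite !Ssum_Sx, Sx_negl. ring.
Qed.

Section Core.
Variables q m t n : R.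
Hypothesis Hq : 3/4 < q < 1.
Hypothesis Hn : 1 <= n.
Definition ts := 2 - / q.
Definition aa := q ^ 2 / (ts * (3 * ts - 2)).
Definition bb := 2 / q.
Definition e := / n.
Definition e1 := / (n + 1).
Definition x := t - ts.
Definition D := t - 3/2 * t ^ 2.
Definition u := (t + q * m) / 2.
Definition v := (t - q * m) / 2.
Definition w := 1 - t.
Definition pp := u * (u + 2 * w).
Definition pm := v * (v + 2 * w).
Definition p0 := w * w + 2 * u * v.
Definition dl (c : R) := aa * e1 * ((c - m) * (2 * m + e1 * (c - m)) + bb * (c ^ 2 - t) * (2 * x + e1 * (c ^ 2 - t))).
Definition G := 4 * aa / q * x ^ 2 * (3/2 * (t + ts) - 1).
Definition WW := pp * ((1 - m) ^ 2 + bb * (1 - t) ^ 2) + pm * ((-1 - m) ^ 2 + bb * (1 - t) ^ 2) + p0 * (m ^ 2 + bb * t ^ 2).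
Definition beta := bb * (1 - t) * (2 * x + e1 * (1 - t)).
Definition K1 := 2 * (pp * (1 - m) + pm * (1 + m)) + e1 * (q * (2 - t) * (1 + m ^ 2) - 2 * (pp + pm)) + beta * q * (2 - t).

Lemma ts_pos : 2/3 < ts.
Proof. unfold ts. assert (/ q < 4/3). { rewrite <- (Rinv_inv (4/3)). apply Rinv_lt_contravar; lra. } lra. Qed.

Lemma core_ident :
  pp * (m + e) ^ 2 * (1 - dl 1) + pm * (m - e) ^ 2 * (1 - dl (-1)) + p0 * m ^ 2 * (1 - dl 0)
  - (1 + 2 * e) * m ^ 2 =
  m ^ 2 * e * G + m ^ 2 * e * e1 * (4 * aa / q) * x * D - m ^ 2 * aa * e1 ^ 2 * WW
  - 2 * aa * e * e1 * m ^ 2 * K1 + e ^ 2 * (pp * (1 - dl 1) + pm * (1 - dl (-1))).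
Proof.
  pose proof ts_pos.
  unfold WW, K1, beta, G, dl, pp, pm, p0, u, v, w, x, D, e, e1, aa, bb.
  unfold ts in *. cbv beta. field.
  repeat split; try lra.
Qed.

Hypothesis Ht : 0 <= t <= 1.
Hypothesis Hm : - t <= m <= t.

Lemma ts_lt1 : ts < 1.
Proof. unfold ts. assert (1 < / q). { rewrite <- Rinv_1. apply Rinv_lt_contravar; lra. } lra. Qed.

Lemma aa_pos : 0 < aa.
Proof. pose proof ts_pos. unfold aa. apply Rdiv_lt_0_compat. nra. nra. Qed.

Lemma bb_bounds : 2 < bb < 8/3.
Proof. unfold bb. split.
  - apply (Rmult_lt_reg_r q); [lra|]. unfold Rdiv. rewrite Rmult_assoc, Rinv_l; lra.
  - apply (Rmult_lt_reg_r q); [lra|]. unfold Rdiv. rewrite Rmult_assoc, Rinv_l; lra.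
Qed.

Lemma e_facts : 0 < e1 <= e /\ e <= 1 /\ e * e1 <= e ^ 2 /\ e1 ^ 2 <= e ^ 2.
Proof.
  unfold e, e1.
  assert (0 < / (n + 1)) by (apply Rinv_0_lt_compat; lra).
  assert (/ (n + 1) <= / n) by (apply Rinv_le_contravar; lra).
  assert (/ n <= 1) by (rewrite <- Rinv_1; apply Rinv_le_contravar; lra).
  repeat split; try lra; nra.
Qed.

Lemma uvw_nonneg : 0 <= u /\ 0 <= v /\ 0 <= w.
Proof. unfold u, v, w. repeat split; nra. Qed.

Lemma probs : 0 <= pp /\ 0 <= pm /\ 0 <= p0 /\ pp + pm + p0 = 1.
Proof.
  pose proof uvw_nonneg as (H1 & H2 & H3).
  unfold pp, pm, p0. repeat split; try nra.
  unfold u, v, w. field.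
Qed.

Lemma B1 : 0 <= G.
Proof.
  pose proof ts_pos. pose proof aa_pos. unfold G.
  apply Rmult_le_pos; [|lra]. apply Rmult_le_pos; [|nra].
  unfold Rdiv. apply Rmult_le_pos; [lra|]. left; apply Rinv_0_lt_compat; lra.
Qed.

Lemma B2 : - (m ^ 2 * e ^ 2 * (4 * aa / q)) <= m ^ 2 * e * e1 * (4 * aa / q) * x * D.
Proof.
  pose proof ts_pos. pose proof ts_lt1. pose proof e_facts as (He1 & He & He2 & He3).
  assert (Hxd : -1 <= x * D) by (unfold x, D; nra).
  assert (HK : 0 <= m ^ 2 * (4 * aa / q)).
  { pose proof aa_pos. apply Rmult_le_pos; [nra|]. unfold Rdiv. apply Rmult_le_pos; [lra|].
    left; apply Rinv_0_lt_compat; lra. }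
  assert (0 <= (e * e1) * (x * D + 1)) by (apply Rmult_le_pos; nra).
  assert (- (e ^ 2) <= e * e1 * (x * D)) by nra.
  replace (m ^ 2 * e * e1 * (4 * aa / q) * x * D) with ((m ^ 2 * (4 * aa / q)) * (e * e1 * (x * D))) by ring.
  replace (- (m ^ 2 * e ^ 2 * (4 * aa / q))) with ((m ^ 2 * (4 * aa / q)) * (- (e ^ 2))) by ring.
  apply Rmult_le_compat_l; auto.
Qed.

Lemma WW_le : WW <= 4 + bb.
Proof.
  pose proof probs as (H1 & H2 & H3 & H4). pose proof bb_bounds as [Hb1 Hb2].
  assert ((1 - m) ^ 2 + bb * (1 - t) ^ 2 <= 4 + bb) by nra.
  assert ((-1 - m) ^ 2 + bb * (1 - t) ^ 2 <= 4 + bb) by nra.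
  assert (m ^ 2 + bb * t ^ 2 <= 4 + bb) by nra.
  unfold WW. nra.
Qed.

Lemma B3 : - (m ^ 2 * e ^ 2 * (aa * (4 + bb))) <= - (m ^ 2 * aa * e1 ^ 2 * WW).
Proof.
  pose proof aa_pos. pose proof WW_le. pose proof e_facts as (He1 & He & He2 & He3).
  pose proof probs as (H1 & H2 & H3 & H4). pose proof bb_bounds as [Hb1 Hb2].
  assert (0 <= WW).
  { assert (Hg : forall y z, 0 <= y ^ 2 + bb * z ^ 2) by (intros; nra).
    unfold WW. repeat apply Rplus_le_le_0_compat; apply Rmult_le_pos; auto. }
  assert (e1 ^ 2 * WW <= e ^ 2 * (4 + bb)) by nra.
  assert (0 <= m ^ 2 * aa) by nra. nra.
Qed.

Lemma K1_le : K1 <= 8 + 6 * bb.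
Proof.
  pose proof probs as (H1 & H2 & H3 & H4). pose proof bb_bounds as [Hb1 Hb2].
  pose proof e_facts as (He1 & He & He2 & He3). pose proof ts_pos.
  assert (pp * (1 - m) + pm * (1 + m) <= 2) by nra.
  assert (e1 * (q * (2 - t) * (1 + m ^ 2) - 2 * (pp + pm)) <= 4).
  { assert (0 <= q * (2 - t) * (1 + m ^ 2) <= 4).
    { split. apply Rmult_le_pos; nra. assert (q * (2 - t) <= 2) by nra. assert (1 + m^2 <= 2) by nra.
      assert (0 <= q * (2 - t)) by nra. nra. }
    nra. }
  assert (beta <= 2 * bb).
  { unfold beta, x. assert (2 * (t - ts) + e1 * (1 - t) <= 2) by nra.
    assert (0 <= bb * (1 - t) <= bb) by nra. nra. }
  assert (0 <= q * (2 - t) <= 2) by nra.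
  unfold K1. nra.
Qed.

Lemma B4 : - (2 * aa * e ^ 2 * m ^ 2 * (8 + 6 * bb)) <= - (2 * aa * e * e1 * m ^ 2 * K1).
Proof.
  pose proof aa_pos. pose proof K1_le. pose proof e_facts as (He1 & He & He2 & He3). pose proof bb_bounds as [Hb1 Hb2].
  assert (0 <= 2 * aa * m ^ 2) by nra.
  assert (e * e1 * K1 <= e ^ 2 * (8 + 6 * bb)).
  { destruct (Rle_dec 0 K1). nra. assert (0 <= e * e1) by nra. nra. }
  nra.
Qed.

Lemma dl_le (c : R) : (c = 1 \/ c = -1) -> aa * (8 + 2 * bb) <= n + 1 -> dl c <= 1.
Proof.
  intros Hc Hn2. pose proof aa_pos. pose proof bb_bounds as [Hb1 Hb2]. pose proof e_facts as (He1 & He & He2 & He3).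
  pose proof ts_pos. pose proof ts_lt1.
  assert (Hc2 : c ^ 2 = 1) by (destruct Hc; subst; ring).
  unfold dl. rewrite Hc2.
  assert (E1 : (c - m) * (2 * m + e1 * (c - m)) <= 8).
  { assert (- 2 <= c - m <= 2) by (destruct Hc; subst; lra).
    assert (- 4 <= 2 * m + e1 * (c - m) <= 4) by nra. nra. }
  assert (E2 : bb * (1 - t) * (2 * x + e1 * (1 - t)) <= 2 * bb).
  { unfold x. assert (2 * (t - ts) + e1 * (1 - t) <= 2) by nra.
    assert (- 3 <= 2 * (t - ts) + e1 * (1 - t)) by nra.
    assert (0 <= bb * (1 - t) <= bb) by nra. nra. }
  assert (e1 * (aa * (8 + 2 * bb)) <= 1).
  { unfold e1. apply (Rmult_le_reg_l (n + 1)); [lra|].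
    rewrite <- Rmult_assoc, Rinv_r by lra. lra. }
  assert (0 <= aa * e1) by nra. nra.
Qed.

Definition Cc := 4 * aa / q + aa * (4 + bb) + 2 * aa * (8 + 6 * bb).

Lemma core : aa * (8 + 2 * bb) <= n + 1 ->
  (1 + 2 * e - Cc * e ^ 2) * m ^ 2 <=
  pp * (m + e) ^ 2 * (1 - dl 1) + pm * (m - e) ^ 2 * (1 - dl (-1)) + p0 * m ^ 2 * (1 - dl 0).
Proof.
  intros Hn2. pose proof core_ident as I. pose proof B1. pose proof B2. pose proof B3. pose proof B4.
  pose proof (dl_le 1 (or_introl eq_refl) Hn2). pose proof (dl_le (-1) (or_intror eq_refl) Hn2).
  pose proof probs as (P1 & P2 & P3 & P4). pose proof e_facts as (He1 & He & He2 & He3).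
  assert (0 <= m ^ 2 * e * G) by (apply Rmult_le_pos; [nra|auto]).
  assert (0 <= e ^ 2 * (pp * (1 - dl 1) + pm * (1 - dl (-1)))).
  { apply Rmult_le_pos; [nra|]. nra. }
  unfold Cc. lra.
Qed.
End Core.

Definition hfun (q S T N : R) : R := aa q * ((S / N) ^ 2 + bb q * (T / N - ts q) ^ 2).
Definition Phi (p : R) (xs : list Z) : R :=
  Sx xs ^ 2 * exp (- hfun (qq p) (Sx xs) (Tx xs) (INR (length xs))).

Lemma Sx_app xs c : Sx (xs ++ [c]) = Sx xs + IZR c.
Proof. unfold Sx. rewrite sumL_app. simpl. ring. Qed.
Lemma Tx_app xs c : Tx (xs ++ [c]) = Tx xs + IZR c ^ 2.
Proof. unfold Tx. rewrite sumL_app. simpl. ring. Qed.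

Lemma Phi_app p xs c : Phi p (xs ++ [c]) =
  (Sx xs + IZR c) ^ 2 * exp (- hfun (qq p) (Sx xs + IZR c) (Tx xs + IZR c ^ 2) (INR (length xs) + 1)).
Proof. unfold Phi. rewrite Sx_app, Tx_app, length_app, plus_INR. reflexivity. Qed.

Lemma term_lb q S T N c P : 0 < N -> 0 <= P ->
  P * (N ^ 2 * (S / N + c * e N) ^ 2) * exp (- hfun q S T N) * (1 - dl q (S / N) (T / N) N c)
  <= P * ((S + c) ^ 2 * exp (- hfun q (S + c) (T + c ^ 2) (N + 1))).
Proof.
  intros HN HP.
  assert (Eh : hfun q (S + c) (T + c ^ 2) (N + 1) = hfun q S T N + dl q (S / N) (T / N) N c).
  { unfold hfun, dl, e1, x. field. lra. }
  assert (Es : N ^ 2 * (S / N + c * e N) ^ 2 = (S + c) ^ 2).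
  { unfold e. field. lra. }
  rewrite Eh, Es. rewrite Ropp_plus_distr, exp_plus.
  pose proof (exp_ineq1_le (- dl q (S / N) (T / N) N c)).
  pose proof (exp_pos (- hfun q S T N)).
  assert (0 <= P * (S + c) ^ 2) by (apply Rmult_le_pos; [auto| apply pow2_ge_0]).
  assert (0 <= P * (S + c) ^ 2 * exp (- hfun q S T N)) by (apply Rmult_le_pos; lra).
  replace (P * ((S + c) ^ 2 * (exp (- hfun q S T N) * exp (- dl q (S / N) (T / N) N c))))
    with (P * (S + c) ^ 2 * exp (- hfun q S T N) * exp (- dl q (S / N) (T / N) N c)) by ring.
  apply Rmult_le_compat_l; lra.
Qed.

Lemma Pp_eq p S T N : 0 < N -> Pp p S T N = pp (qq p) (S / N) (T / N).
Proof. intros. unfold Pp, pp, u, w. field. lra. Qed.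
Lemma Pm_eq p S T N : 0 < N -> Pm p S T N = pm (qq p) (S / N) (T / N).
Proof. intros. unfold Pm, pm, v, w. field. lra. Qed.
Lemma P0_eq p S T N : 0 < N -> P0 p S T N = p0 (qq p) (S / N) (T / N).
Proof. intros. unfold P0, p0, u, v, w. field. lra. Qed.

Lemma Phi_step p xs : 7/8 < p < 1 -> Forall tri xs -> (1 <= length xs)%nat ->
  aa (qq p) * (8 + 2 * bb (qq p)) <= INR (length xs) + 1 ->
  (1 + 2 * e (INR (length xs)) - Cc (qq p) * e (INR (length xs)) ^ 2) * Phi p xs
  <= Kstep p (Phi p) xs.
Proof.
  intros Hp Ht Hl Hbig.
  rewrite Kstep_formula by auto. rewrite !Phi_app.
  set (N := INR (length xs)) in *. set (S := Sx xs). set (T := Tx xs).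
  assert (HN : 1 <= N) by (unfold N; apply (le_INR 1); auto).
  assert (Hq : 3/4 < qq p < 1) by (unfold qq; lra).
  destruct (tri_bounds xs Ht) as [HS HT]. fold S T N in HS, HT.
  assert (Htt : 0 <= T / N <= 1).
  { split. unfold Rdiv; apply Rmult_le_pos; [lra|left; apply Rinv_0_lt_compat; lra]. apply (Rmult_le_reg_r N); [lra|].
    unfold Rdiv. rewrite Rmult_assoc, Rinv_l by lra. lra. }
  assert (Hmm : - (T / N) <= S / N <= T / N).
  { split; apply (Rmult_le_reg_r N); try lra; unfold Rdiv; rewrite ?Ropp_mult_distr_l_reverse, !Rmult_assoc, Rinv_l by lra; lra. }
  pose proof (core (qq p) (S / N) (T / N) N Hq HN Htt Hmm Hbig) as Hc.
  pose proof (probs (qq p) (S / N) (T / N) Hq Htt Hmm) as (P1 & P2 & P3 & _).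
  rewrite Pp_eq, Pm_eq, P0_eq by lra.
  pose proof (term_lb (qq p) S T N 1 (pp (qq p) (S / N) (T / N)) ltac:(lra) P1) as T1.
  pose proof (term_lb (qq p) S T N (-1) (pm (qq p) (S / N) (T / N)) ltac:(lra) P2) as T2.
  pose proof (term_lb (qq p) S T N 0 (p0 (qq p) (S / N) (T / N)) ltac:(lra) P3) as T3.
  replace (IZR 1) with 1 by reflexivity. replace (IZR (-1)) with (-1) by reflexivity.
  replace (IZR 0) with 0 by reflexivity.
  unfold Phi. fold S T N.
  pose proof (exp_pos (- hfun (qq p) S T N)) as Hexp.
  set (EE := exp (- hfun (qq p) S T N)) in *.
  assert (HSm : S ^ 2 = N ^ 2 * (S / N) ^ 2) by (field; lra).
  set (m := S / N) in *. set (t := T / N) in *.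
  assert (0 <= N ^ 2 * EE) by (apply Rmult_le_pos; [apply pow2_ge_0|lra]).
  eapply Rle_trans; [|apply Rplus_le_compat; [apply Rplus_le_compat; [exact T1|exact T2]|exact T3]].
  rewrite HSm.
  set (L := pp (qq p) m t * (m + e N) ^ 2 * (1 - dl (qq p) m t N 1) +
      pm (qq p) m t * (m - e N) ^ 2 * (1 - dl (qq p) m t N (-1)) +
      p0 (qq p) m t * m ^ 2 * (1 - dl (qq p) m t N 0)) in Hc.
  assert (N ^ 2 * EE * ((1 + 2 * e N - Cc (qq p) * e N ^ 2) * m ^ 2) <= N ^ 2 * EE * L)
    by (apply Rmult_le_compat_l; auto).
  unfold L in *.
  match goal with H : ?a <= ?b |- ?c <= ?d => replace c with a by ring; replace d with b by ring end.
  auto.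
Qed.

Lemma hfun_nonneg q S T N : 3/4 < q < 1 -> 0 <= hfun q S T N.
Proof.
  intros Hq. unfold hfun. pose proof (aa_pos q Hq). pose proof (bb_bounds q Hq) as [H1 H2].
  apply Rmult_le_pos; [lra|]. apply Rplus_le_le_0_compat; [apply pow2_ge_0|].
  apply Rmult_le_pos; [lra|apply pow2_ge_0].
Qed.

Lemma Phi_nonneg p xs : 0 <= Phi p xs.
Proof. unfold Phi. apply Rmult_le_pos; [apply pow2_ge_0|]. left; apply exp_pos. Qed.

Lemma Phi_le p xs : 7/8 < p < 1 -> Phi p xs <= Sx xs ^ 2.
Proof.
  intros Hp. unfold Phi.
  set (h := hfun (qq p) (Sx xs) (Tx xs) (INR (length xs))).
  assert (0 <= h) by (apply hfun_nonneg; unfold qq; lra).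
  pose proof (exp_ineq1_le h). pose proof (exp_pos (- h)).
  assert (exp (- h) * exp h = 1) by (rewrite <- exp_plus; replace (- h + h) with 0 by ring; apply exp_0).
  assert (exp (- h) <= 1) by nra.
  pose proof (pow2_ge_0 (Sx xs)). nra.
Qed.

Definition coefn q n := 1 + 2 * e n - Cc q * e n ^ 2.

Lemma rec p k : 7/8 < p < 1 ->
  aa (qq p) * (8 + 2 * bb (qq p)) <= INR k + 2 + 1 ->
  coefn (qq p) (INR k + 2) * expect (W p k) (Phi p) <= expect (W p (S k)) (Phi p).
Proof.
  intros Hp Hb. rewrite W_S, expect_step, <- expect_scale. apply expect_le_in.
  intros xs r Hin. destruct (W_WF p k ltac:(lra) xs r Hin) as (Hl & Ht & Hr).
  split; auto. unfold coefn.
  assert (E2 : INR (length xs) = INR k + 2) by (rewrite Hl; rewrite !S_INR; ring).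
  rewrite <- E2. apply Phi_step; auto. lia. lra.
Qed.

Definition ff Cv y := (y + Cv) * (y + Cv + 1).



Lemma coef_ff Cv y : 0 < Cv -> Cv <= y -> 1 <= y ->
  ff Cv (y + 1) <= (1 + 2 * / y - Cv * (/ y) ^ 2) * ff Cv y.
Proof.
  intros H1 H2 H3. unfold ff.
  assert (E : (1 + 2 * / y - Cv * (/ y) ^ 2) * ((y + Cv) * (y + Cv + 1)) - (y + 1 + Cv) * (y + 1 + Cv + 1)
     = (y + Cv + 1) * Cv * (y - Cv) / y ^ 2) by (field; lra).
  assert (0 <= (y + Cv + 1) * Cv * (y - Cv) / y ^ 2).
  { unfold Rdiv. apply Rmult_le_pos. apply Rmult_le_pos; [|lra]. apply Rmult_le_pos; lra.
    left. apply Rinv_0_lt_compat. nra. }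
  lra.
Qed.

Lemma Cc_pos q : 3/4 < q < 1 -> 0 < Cc q.
Proof.
  intros Hq. pose proof (aa_pos q Hq). pose proof (bb_bounds q Hq) as [H1 H2].
  unfold Cc. assert (0 < 4 * aa q / q) by (unfold Rdiv; apply Rmult_lt_0_compat; [lra|apply Rinv_0_lt_compat; lra]).
  nra.
Qed.

Lemma e_inv y : e y = / y.
Proof. reflexivity. Qed.

Lemma grow p K : 7/8 < p < 1 ->
  Cc (qq p) <= INR K + 2 -> aa (qq p) * (8 + 2 * bb (qq p)) <= INR K + 2 + 1 ->
  forall j, expect (W p K) (Phi p) * ff (Cc (qq p)) (INR (K + j) + 2)
            <= expect (W p (K + j)) (Phi p) * ff (Cc (qq p)) (INR K + 2).
Proof.
  intros Hp H1 H2. assert (Hq : 3/4 < qq p < 1) by (unfold qq; lra).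
  pose proof (Cc_pos _ Hq) as HC.
  set (Cv := Cc (qq p)) in *.
  assert (HA : forall k, 0 <= expect (W p k) (Phi p)).
  { intros k. apply expect_nonneg. intros xs r Hin. destruct (W_WF p k ltac:(lra) xs r Hin) as (_ & _ & Hr).
    split; auto. apply Phi_nonneg. }
  induction j.
  - rewrite Nat.add_0_r. lra.
  - rewrite Nat.add_succ_r.
    set (y := INR (K + j) + 2).
    assert (Hy : INR K + 2 <= y) by (unfold y; apply Rplus_le_compat_r; apply le_INR; lia).
    pose proof (pos_INR K) as HK0.
    assert (Ey : INR (S (K + j)) + 2 = y + 1) by (unfold y; rewrite S_INR; ring).
    rewrite Ey.
    pose proof (rec p (K + j) Hp ltac:(fold y; lra)) as Hr. fold y in Hr.
    pose proof (coef_ff Cv y HC ltac:(lra) ltac:(lra)) as Hf.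
    unfold coefn in Hr. rewrite e_inv in Hr. fold Cv in Hr.
    assert (Hff : 0 <= ff Cv y) by (unfold ff; nra).
    assert (HfN : 0 <= ff Cv (INR K + 2)) by (unfold ff; nra).
    assert (Hc0 : 0 <= 1 + 2 * / y - Cv * (/ y) ^ 2).
    { assert (0 < ff Cv (y + 1)) by (unfold ff; nra). 
      destruct (Rle_dec 0 (1 + 2 * / y - Cv * (/ y) ^ 2)); auto. nra. }
    pose proof (HA K). pose proof (HA (K + j)%nat).
    apply Rle_trans with (expect (W p K) (Phi p) * ((1 + 2 * / y - Cv * (/ y) ^ 2) * ff Cv y)).
    { apply Rmult_le_compat_l; auto. }
    apply Rle_trans with ((1 + 2 * / y - Cv * (/ y) ^ 2) * (expect (W p (K + j)) (Phi p) * ff Cv (INR K + 2))).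
    { replace (expect (W p K) (Phi p) * ((1 + 2 * / y - Cv * (/ y) ^ 2) * ff Cv y))
        with ((1 + 2 * / y - Cv * (/ y) ^ 2) * (expect (W p K) (Phi p) * ff Cv y)) by ring.
      apply Rmult_le_compat_l; auto. }
    rewrite <- Rmult_assoc. apply Rmult_le_compat_r; auto.
Qed.

Lemma repeat_snoc (a : Z) n : repeat a n ++ [a] = repeat a (S n).
Proof. induction n; simpl; auto. rewrite IHn. reflexivity. Qed.

Lemma Sx_repeat n : Sx (repeat 1%Z n) = INR n.
Proof. unfold Sx. induction n; simpl repeat; cbn [sumL]; [reflexivity|]. rewrite IHn, S_INR. ring. Qed.

Lemma ones_in p k : 0 < p < 1 -> exists r, 0 < r /\ In (repeat 1%Z (S (S k)), r) (W p k).
Proof.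
  intros Hp. induction k.
  - exists (1/4). split; [lra|]. simpl. left. reflexivity.
  - destruct IHk as [r [Hr Hin]]. rewrite W_S.
    pose proof (step_In_intro p (W p k) _ r Hin) as H.
    rewrite repeat_length in H. specialize (H ltac:(lia)).
    replace (clamp (1 * nth 0 (repeat 1%Z (S (S k))) 0 + 1 * nth 0 (repeat 1%Z (S (S k))) 0))%Z with 1%Z in H
      by reflexivity.
    rewrite repeat_snoc in H.
    eexists. split; [|exact H].
    assert (0 < INR (S (S k))) by (apply lt_0_INR; lia).
    assert (0 < / INR (S (S k))) by (apply Rinv_0_lt_compat; auto).
    repeat apply Rmult_lt_0_compat; lra.
Qed.

Lemma A_pos p k : 7/8 < p < 1 -> 0 < expect (W p k) (Phi p).
Proof.
  intros Hp. destruct (ones_in p k ltac:(lra)) as [r [Hr Hin]].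
  assert (0 < Phi p (repeat 1%Z (S (S k)))).
  { unfold Phi. rewrite Sx_repeat. apply Rmult_lt_0_compat; [|apply exp_pos].
    assert (0 < INR (S (S k))) by (apply lt_0_INR; lia). nra. }
  pose proof (expect_single (W p k) (Phi p) _ r Hin) as H1.
  assert (r * Phi p (repeat 1%Z (S (S k))) <= expect (W p k) (Phi p)).
  { apply H1. intros xs s Hs. destruct (W_WF p k ltac:(lra) xs s Hs) as (_ & _ & Hr').
    split; auto. apply Phi_nonneg. }
  nra.
Qed.

Theorem corollary2p2 (p : R) (hp : 7/8 < p < 1) :
  exists (c C : R) (N : nat),
    0 < c /\ 0 < C /\
    forall n : nat, (N <= n)%nat ->
      c * INR n ^ 2 <= VarS p n <= C * INR n ^ 2.
Proof.
  assert (Hq : 3/4 < qq p < 1) by (unfold qq; lra).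
  pose proof (Cc_pos _ Hq) as HC.
  destruct (INR_archimed 1 (Rmax (Cc (qq p)) (aa (qq p) * (8 + 2 * bb (qq p)))) ltac:(lra)) as [K HK].
  rewrite Rmult_1_r in HK.
  pose proof (Rmax_l (Cc (qq p)) (aa (qq p) * (8 + 2 * bb (qq p)))).
  pose proof (Rmax_r (Cc (qq p)) (aa (qq p) * (8 + 2 * bb (qq p)))).
  pose proof (pos_INR K).
  assert (T1 : Cc (qq p) <= INR K + 2) by lra.
  assert (T2 : aa (qq p) * (8 + 2 * bb (qq p)) <= INR K + 2 + 1) by lra.
  pose proof (grow p K hp T1 T2) as Hgrow.
  set (Cv := Cc (qq p)) in *.
  set (AK := expect (W p K) (Phi p)).
  assert (HAK : 0 < AK) by (apply A_pos; auto).
  pose proof (pos_INR K) as HK0.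
  assert (HfN : 0 < ff Cv (INR K + 2)) by (unfold ff; nra).
  exists (AK / ff Cv (INR K + 2)), 1, (K + 2)%nat.
  split; [apply Rdiv_lt_0_compat; auto|]. split; [lra|].
  intros n Hn.
  destruct n as [|[|k]]; [lia|lia|].
  assert (Hn' : INR (S (S k)) = INR k + 2) by (rewrite !S_INR; ring).
  unfold VarS. change (walk_law p (S (S k))) with (W p k).
  rewrite W_mean by lra.
  replace (0 ^ 2) with 0 by ring. rewrite Rminus_0_r.
  split.
  -
    assert (Hk : k = (K + (k - K))%nat) by lia.
    pose proof (Hgrow (k - K)%nat) as Hg.
    rewrite <- Hk in Hg. fold AK in Hg.
    assert (HPhi : expect (W p k) (Phi p) <= expect (W p k) (fun xs => Ssum xs ^ 2)).
    { apply expect_le_in. intros xs r Hin. destruct (W_WF p k ltac:(lra) xs r Hin) as (_ & _ & Hr).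
      split; auto. rewrite Ssum_Sx. apply Phi_le; auto. }
    assert (Hff : INR (S (S k)) ^ 2 <= ff Cv (INR k + 2)) by (rewrite Hn'; unfold ff; pose proof (pos_INR k); nra).
    assert (AK * ff Cv (INR k + 2) / ff Cv (INR K + 2) <= expect (W p k) (Phi p)).
    { apply (Rmult_le_reg_r (ff Cv (INR K + 2))); auto. unfold Rdiv. rewrite Rmult_assoc, Rinv_l by lra. lra. }
    apply Rle_trans with (AK * ff Cv (INR k + 2) / ff Cv (INR K + 2)); [|lra].
    unfold Rdiv. assert (0 <= / ff Cv (INR K + 2) * AK) by (apply Rmult_le_pos; [left; apply Rinv_0_lt_compat; auto|lra]).
    nra.
  -
    rewrite Rmult_1_l.
    rewrite <- (Rmult_1_r (INR (S (S k)) ^ 2)).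
    rewrite <- (W_mass p k ltac:(lra)). rewrite <- expect_scale.
    apply expect_le_in. intros xs r Hin. destruct (W_WF p k ltac:(lra) xs r Hin) as (Hl & Ht & Hr).
    split; auto. rewrite Ssum_Sx. destruct (tri_bounds xs Ht) as [B1 B2]. rewrite Hl in B2. nra.
Qed.
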